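(* Let $(X,d)$ be a compact metric space with a finite Borel measure $\mu$. If a surjective map $\psi:X\to X$ is 1-Lipschitz and measure-contracting (i.e. $\mu(A)\le\mu(\psi^{-1}(A))$ for every Borel $A\subset X$), then $\psi$ is a measure-preserving isometry. *)

(* Defs.v *)
From HB Require Import structures.
From mathcomp Require Import all_boot all_order all_algebra.
From mathcomp Require Import all_classical all_reals all_analysis.
Set Implicit Arguments.
Unset Strict Implicit.
Unset Printing Implicit Defensive.

(* MathComp-Analysis measurable types must be pointed (nonempty).  We thus
   equip a type with a chosen point [x0] via the alias [pointed_at x0]. *)
Definition pointed_at (T : choiceType) (x0 : T) : Type := T.
HB.instance Definition _ (T : choiceType) (x0 : T) :=
  Choice.on (pointed_at x0).
HB.instance Definition _ (T : choiceType) (x0 : T) :=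
  isPointed.Build (pointed_at x0) x0.

Definition open_sets (X : topologicalType) (x0 : X) : set (set (pointed_at x0)) :=
  @open X.

Notation borel X x0 := (g_sigma_algebraType (@open_sets X x0)).

(* Main.v *)
Require Import Defs.
From HB Require Import structures.
From mathcomp Require Import all_boot all_order all_algebra.
From mathcomp Require Import all_classical all_reals all_analysis.
From mathcomp Require Import ring lra.
Import Order.TTheory GRing.Theory Num.Theory.
Local Open Scope classical_set_scope.
Local Open Scope ring_scope.

Lemma recur (R : realType) (X : metricType R) (u : nat -> X * X) :
  compact [set: X] -> exists p : X * X, forall (e : R), 0 < e -> forall N,
  exists n, (N <= n)%N /\ mdist p.1 (u n).1 < e /\ mdist p.2 (u n).2 < e.
Proof.
move=> cX.
have cXX := compact_setX cX cX.
have [|p [_ clp]] := cXX (u @ \oo) _ _.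
  by rewrite setXTT; apply: filterT.

exists p => e e0 N.
have [|q [[n Nn <-] [b1 b2]]] := clp (u @` [set n | (N <= n)%N]) (ball p e) _ (nbhsx_ballx p _ e0).
  by exists N => // n /= Nn; exists n.
exists n; split => //.
by move: b1 b2; rewrite !ballEmdist.
Qed.


Lemma iso (R : realType) (X : metricType R) (psi : X -> X) :
  compact [set: X] -> (forall y : X, exists x : X, psi x = y) ->
  (forall x y : X, mdist (psi x) (psi y) <= mdist x y) ->
  forall x y : X, mdist (psi x) (psi y) = mdist x y.
Proof.
move=> cX surj lip.
have [g gK] := choice surj.
have iterK k n z : iter k psi (iter (k + n) g z) = iter n g z.
  elim: k => // k IH; by rewrite iterSr addSn iterS gK IH.
have lipk k a b : mdist (iter k psi a) (iter k psi b) <= mdist a b.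
  elim: k => // k IH; rewrite !iterS; exact: le_trans (lip _ _) IH.
move=> x y; apply/eqP; rewrite eq_le lip /=.
pose xs n := iter n g x; pose ys n := iter n g y.
have mono k : mdist x y <= mdist (xs k) (ys k).
  have := lipk k (xs k) (ys k).
  rewrite /xs /ys; have := iterK k 0%N x; have := iterK k 0%N y.
  by rewrite addn0 /= => -> ->.
have close i j : mdist (iter i.+1 psi (xs i)) (iter i.+1 psi (xs (i.+1 + j)%N)) <= mdist (xs i) (xs (i.+1 + j)%N) /\
   mdist (iter i.+1 psi (ys i)) (iter i.+1 psi (ys (i.+1 + j)%N)) <= mdist (ys i) (ys (i.+1 + j)%N).
  by split; apply: lipk.
have ex i : iter i.+1 psi (xs i) = psi x /\ iter i.+1 psi (ys i) = psi y.
  rewrite /xs /ys !iterS; have := iterK i 0%N x; have := iterK i 0%N y.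
  by rewrite addn0 /= => -> ->.
have ej i j : iter i.+1 psi (xs (i.+1 + j)%N) = xs j /\ iter i.+1 psi (ys (i.+1 + j)%N) = ys j.
  by rewrite /xs /ys !iterK.
have [p Hp] := @recur _ _ (fun n => (xs n, ys n)) cX.
apply/ler_addgt0Pr => e e0.
have e40 : 0 < e / 4 by rewrite divr_gt0.
have [i [_ [hi1 hi2]]] := Hp _ e40 0%N.
have [j' [ij [hj1 hj2]]] := Hp _ e40 i.+1.
have [k jk] : exists k, j' = (i.+1 + k)%N by exists (j' - i.+1)%N; rewrite subnKC.
rewrite {}jk /= in hj1 hj2.
have [c1 c2] := close i k; have [x1 y1] := ex i; have [x2 y2] := ej i k.
rewrite x1 x2 in c1; rewrite y1 y2 in c2.
have d1 : mdist (xs i) (xs (i.+1 + k)%N) < e / 2.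
  apply: le_lt_trans (metric_triangle _ p.1 _) _.
  rewrite (metric_sym (xs i)) (_ : e / 2 = e / 4 + e / 4); last by field.
  by rewrite ltrD.
have d2 : mdist (ys i) (ys (i.+1 + k)%N) < e / 2.
  apply: le_lt_trans (metric_triangle _ p.2 _) _.
  rewrite (metric_sym (ys i)) (_ : e / 2 = e / 4 + e / 4); last by field.
  by rewrite ltrD.
apply: le_trans (mono k) _.
apply: le_trans (metric_triangle _ (psi x) _) _.
apply: le_trans (lerD (lexx _) (metric_triangle _ (psi y) _)) _.
rewrite (metric_sym (xs k)).
have := le_lt_trans c1 d1; have := le_lt_trans c2 d2.
move: (mdist (psi x) (xs k)) (mdist (psi y) (ys k)) (mdist (psi x) (psi y)) => a b c ha hb.
lra.
Qed.

Lemma psi_meas (R : realType) (X : metricType R) (x0 : X) (psi : X -> X) :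
  (forall x y : X, mdist (psi x) (psi y) <= mdist x y) ->
  @measurable_fun _ _ (borel X x0) (borel X x0) [set: borel X x0] psi.
Proof.
move=> lip.
have cont : continuous psi.
  move=> x; apply/(metricType_numDomainType.cvgrPdist_lt psi (psi x)) => e e0.
  have := @metricType_numDomainType.cvgr_dist_lt _ _ _ _ _ (fun t : X => t) x (@cvg_id _ (nbhs x)) e e0.
  move=> hh; near=> t; apply: le_lt_trans (lip _ _) _; near: t; exact: hh.
apply: (@measurability _ _ (borel X x0) (borel X x0) _ _ (@open_sets X x0)) => //.
move=> _ [B oB <-]; apply: sub_sigma_algebra; rewrite setTI.
rewrite /open_sets; apply: open_comp => //; move=> y _; exact: cont.
Unshelve. all: by end_near.
Qed.

Lemma aux (R : realType) (t a b : \bar R) : t \is a fin_num -> a \is a fin_num ->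
  b \is a fin_num -> (a <= b)%E -> (t - a <= t - b)%E -> b = a.
Proof.
move=> /fineK <- /fineK <- /fineK <-; rewrite -!EFinB !lee_fin => h1 h2.
congr EFin; lra.
Qed.

Lemma meas_pres (R : realType) (X : metricType R) (x0 : X)
  (mu : {measure set (borel X x0) -> \bar R})
  (psi : X -> X) :
  (mu [set: borel X x0] < +oo)%E ->
  @measurable_fun _ _ (borel X x0) (borel X x0) [set: borel X x0] psi ->
  (forall A : set (borel X x0), measurable A -> (mu A <= mu (psi @^-1` A))%E) ->
  forall A : set (borel X x0), measurable A -> mu (psi @^-1` A) = mu A.
Proof.
move=> finT mpsi H A mA.
have mB : measurable (psi @^-1` A : set (borel X x0)).
  by have := mpsi measurableT A mA; rewrite setTI.
have fin (C : set (borel X x0)) : measurable C -> mu C \is a fin_num.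
  move=> mC; rewrite ge0_fin_numE//; apply: le_lt_trans finT.
  by apply: le_measure => //; rewrite inE.
have hC := H _ (measurableD measurableT mA).
have E : psi @^-1` ([set: borel X x0] `\` A) = [set: borel X x0] `\` psi @^-1` A by [].
rewrite E in hC.
move: hC; rewrite !measureD // !setTI.
move: (H A mA).
move=> h1 h2; apply: (@aux R (mu [set: borel X x0])) => //; exact: fin.
Qed.

Theorem lemma3p8 (R : realType) (X : metricType R) (x0 : X)
  (mu : {measure set (borel X x0) -> \bar R})
  (psi : X -> X) :
  compact [set: X] ->
  (mu [set: borel X x0] < +oo)%E ->
  (forall y : X, exists x : X, psi x = y) ->
  (forall x y : X, mdist (psi x) (psi y) <= mdist x y) ->
  (forall A : set (borel X x0), measurable A -> (mu A <= mu (psi @^-1` A))%E) ->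
  (forall x y : X, mdist (psi x) (psi y) = mdist x y) /\
  (@measurable_fun _ _ (borel X x0) (borel X x0) [set: borel X x0] psi /\
   forall A : set (borel X x0), measurable A -> mu (psi @^-1` A) = mu A).
Proof.
move=> cX finT surj lip H.
have mpsi := @psi_meas R X x0 psi lip.
split; first exact: iso.
split => //; exact: meas_pres.
Qed.
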